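(* Let $\mathcal{G}$ be an undirected graph on $N$ vertices with symmetric weighted adjacency matrix $\mathbf{A}$ having nonnegative entries ($a_{ij}>0$ on edges, $a_{ij}=0$ otherwise, $a_{ii}=0$), weighted degree matrix $\mathbf{D}=\mathrm{diag}(d_{ii})$ with $d_{ii}=\sum_j a_{ij}$, and deformed Laplacian $\mathbf{L}_{\mathrm{DF}}(r)=(\mathbf{D}-\mathbf{I})r^2-\mathbf{A}r+\mathbf{I}$. Then: (a) $\mathbf{L}_{\mathrm{DF}}(r)$ is a regular matrix polynomial and $0$ is never an eigenvalue of it; (b) $1$ is always an eigenvalue of $\mathbf{L}_{\mathrm{DF}}(r)$, with geometric multiplicity equal to the number of connected components of $\mathcal{G}$; (c) the geometric multiplicity of $\infty$ as an eigenvalue of $\mathbf{L}_{\mathrm{DF}}(r)$ equals the number of vertices of (weighted) degree $d_{ii}=1$; in particular $\infty$ is an eigenvalue iff $\mathcal{G}$ has at least one vertex of degree $1$; (d) $-1$ is an eigenvalue of $\mathbf{L}_{\mathrm{DF}}(r)$ if and only if $\mathcal{G}$ has at least one bipartite connected component, and in that case its geometric multiplicity equals the number of bipartite connected components of $\mathcal{G}$.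
   Context: For a square matrix polynomial $\mathbf{P}(r)=\sum_{j=0}^k \mathbf{A}_j r^j$ with $\mathbf{A}_k\neq 0$: it is regular if $\det\mathbf{P}(r)$ is not identically zero; a finite eigenvalue is $r_0\in\mathbb{C}$ with $\det\mathbf{P}(r_0)=0$, with geometric multiplicity $\dim\ker\mathbf{P}(r_0)$; $\infty$ is an eigenvalue if $0$ is an eigenvalue of the reversal polynomial $r^k\mathbf{P}(1/r)$, and its geometric multiplicity is $\dim\ker\mathbf{A}_k$ (for $\mathbf{L}_{\mathrm{DF}}$, $\dim\ker(\mathbf{D}-\mathbf{I})$). A connected component is bipartite if its vertex set splits into two disjoint sets with every edge joining the two sets (isolated vertices count as bipartite components). *)

(* Defs.v *)
From HB Require Import structures.
From mathcomp Require Import all_boot all_order all_algebra.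
Set Implicit Arguments. Unset Strict Implicit. Unset Printing Implicit Defensive.
Import Order.TTheory GRing.Theory Num.Theory.
Local Open Scope ring_scope.

Section DeformedLaplacian.
Variables (C : numClosedFieldType) (N : nat) (A : 'M[C]_N).

Definition wdeg (i : 'I_N) : C := \sum_(j < N) A i j.
Definition degmx : 'M[C]_N := \matrix_(i, j) (if i == j then wdeg i else 0).

Definition LDF_poly : 'M[{poly C}]_N :=
  \matrix_(i, j) (((degmx - 1%:M) i j)%:P * 'X^2 - (A i j)%:P * 'X
                  + ((1%:M : 'M[C]_N) i j)%:P).

Definition LDF (r : C) : 'M[C]_N := (r ^+ 2) *: (degmx - 1%:M) - r *: A + 1%:M.

(* reversal polynomial r^2 L_DF(1/r) = (D - I) - A r + I r^2, evaluated at r *)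
Definition LDF_rev (r : C) : 'M[C]_N := (degmx - 1%:M) - r *: A + (r ^+ 2) *: 1%:M.

Definition regular_mxpoly (P : 'M[{poly C}]_N) : Prop := \det P != 0.

Definition is_eigenvalue (r0 : C) : Prop := \det (LDF r0) = 0.

(* dimension of the (column) kernel {v | M v = 0} *)
Definition kerdim (M : 'M[C]_N) : nat := \rank (kermx M^T).

Definition geom_mult (r0 : C) : nat := kerdim (LDF r0).

Definition is_eigenvalue_inf : Prop := \det (LDF_rev 0) = 0.

Definition geom_mult_inf : nat := kerdim (degmx - 1%:M).

Definition edge : rel 'I_N := fun i j => 0 < A i j.

Definition num_components : nat := n_comp edge 'I_N.

Definition bipartite_comp (x : 'I_N) : bool :=
  [exists f : {ffun 'I_N -> bool},
    [forall i, forall j,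
       (connect edge x i && connect edge x j && edge i j) ==> (f i != f j)]].

Definition num_bipartite_components : nat :=
  #|[set x : 'I_N | roots edge x & bipartite_comp x]|.

Definition num_deg_one : nat := #|[set i : 'I_N | wdeg i == 1]|.

End DeformedLaplacian.

(* Main.v *)
Require Import Defs.
From HB Require Import structures.
From mathcomp Require Import all_boot all_order all_algebra.
From mathcomp Require Import ring.
Import Order.TTheory GRing.Theory Num.Theory.
Local Open Scope ring_scope.
Lemma kerdim_basis (C : fieldType) (N : nat) (M : 'M[C]_N) (S : {set 'I_N})
  (v : 'I_N -> 'I_N -> C) :
  (forall r, r \in S -> v r r = 1) ->
  (forall r s, r \in S -> s \in S -> r != s -> v r s = 0) ->
  (forall r, r \in S -> (\row_i v r i) *m M^T = 0) ->
  (forall u : 'rV_N, u *m M^T = 0 -> u = \sum_(r in S) u 0 r *: \row_i v r i) ->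
  \rank (kermx M^T) = #|S|.
Proof.
move=> v1 v0 vk dec.
pose B : 'M[C]_(#|S|, N) := \matrix_(k, i) v (enum_val k) i.
have rowB k : row k B = \row_i v (enum_val k) i.
  by apply/rowP => i; rewrite !mxE.
have sBK : (B <= kermx M^T)%MS.
  apply/sub_kermxP; apply/row_matrixP => k.
  by rewrite row0 row_mul rowB vk // enum_valP.
have sKB : (kermx M^T <= B)%MS.
  apply/row_subP => k.
  have hk : row k (kermx M^T) *m M^T = 0.
    by rewrite -row_mul mulmx_ker row0.
  rewrite (dec _ hk); apply: summx_sub => r hr; apply: scalemx_sub.
  have -> : (\row_i v r i) = row (enum_rank_in hr r) B.
    by rewrite rowB enum_rankK_in.
  exact: row_sub.
pose E : 'M[C]_(N, #|S|) := \matrix_(i, k) (i == enum_val k)%:R.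
have BE : B *m E = 1%:M.
  apply/matrixP => k l; rewrite !mxE.
  rewrite (bigD1 (enum_val l)) //= big1 => [|i ni]; last by rewrite !mxE (negbTE ni) mulr0.
  rewrite !mxE eqxx mulr1 addr0.
  have [->|nkl] := eqVneq k l; first by rewrite v1 // enum_valP.
  rewrite v0 ?enum_valP //.
  by apply: contra nkl => /eqP /enum_val_inj ->.
apply/eqP; rewrite eqn_leq; apply/andP; split.
  exact: leq_trans (mxrankS sKB) (rank_leq_row B).
have := mxrankM_maxl B E; rewrite BE mxrank1 => h.
by apply: leq_trans h (mxrankS sBK).
Qed.
Lemma det_kerdim (C : fieldType) (N : nat) (M : 'M[C]_N) :
  \det M = 0 <-> (0 < \rank (kermx M^T))%N.
Proof.
rewrite lt0n mxrank_eq0 kermx_eq0 row_free_unit unitmxE det_tr unitfE.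
by split => [->|]; [rewrite eqxx | case: eqP].
Qed.

Section G.
Variables (C : numClosedFieldType) (N : nat) (A : 'M[C]_N).
Hypothesis hsym : A^T = A.
Hypothesis hnonneg : forall i j, 0 <= A i j.

Lemma Asym i j : A j i = A i j.
Proof. by rewrite -{1}hsym mxE. Qed.

Lemma LDF_row r (hr : r * r = 1) (u : 'rV[C]_N) i :
  (u *m (LDF A r)^T) 0 i = \sum_j A i j * (u 0 i - r * u 0 j).
Proof.
rewrite mxE.
have e j : u 0 j * (LDF A r)^T j i = (i == j)%:R * wdeg A i * u 0 j - r * (A i j * u 0 j).
  rewrite !mxE expr2 hr mul1r.
  case: (eqVneq i j) => [->|nij]; first by rewrite /=; ring.
  by rewrite /=; ring.
rewrite (eq_bigr _ (fun j _ => e j)) sumrB -mulr_sumr.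
rewrite (bigD1 i) //= big1 => [|j nj]; last by rewrite eq_sym (negbTE nj) !mul0r.
rewrite eqxx mul1r addr0 /wdeg mulr_suml mulr_sumr -sumrB.
by apply: eq_bigr => j _; ring.
Qed.

Lemma ker_char r (hr : r * r = 1) (hrc : r^* = r) (u : 'rV[C]_N) :
  u *m (LDF A r)^T = 0 <-> forall i j, 0 < A i j -> u 0 i = r * u 0 j.
Proof.
split=> [h|h]; last first.
  apply/rowP => i; rewrite LDF_row // mxE big1 // => j _.
  have := hnonneg i j; rewrite le0r => /orP[/eqP->|/h->]; first by rewrite mul0r.
  by rewrite subrr mulr0.
have g0 i : \sum_j A i j * (u 0 i - r * u 0 j) = 0.
  by rewrite -LDF_row // h mxE.
pose z i j := u 0 i - r * u 0 j.
have key i j : A i j * (z i j * (z i j)^*) =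
    A i j * z i j * (u 0 i)^* + A j i * z j i * (u 0 j)^*.
  rewrite (Asym i j) /z rmorphB rmorphM /= hrc.
  apply/eqP; rewrite -subr_eq0; apply/eqP.
  transitivity (A i j * (u 0 j)^* * u 0 j * (r * r - 1)); first by ring.
  by rewrite hr subrr mulr0.
have F0 : \sum_i \sum_j A i j * (z i j * (z i j)^*) = 0.
  under eq_bigr => i _ do under eq_bigr => j _ do rewrite key.
  rewrite (eq_bigr _ (fun i _ => big_split _ _ _ _ _)) big_split /=.
  rewrite [X in _ + X = _]exchange_big /=.
  rewrite (eq_bigr (fun i => 0)) => [|i _]; last first.
    by rewrite /z -mulr_suml g0 mul0r.
  by rewrite big1 ?add0r.
have ge0 i j : 0 <= A i j * (z i j * (z i j)^*) by rewrite mulr_ge0 ?mul_conjC_ge0.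
move=> i j hij.
have H1 := psumr_eq0P (fun i _ => sumr_ge0 _ (fun j _ => ge0 i j)) F0.
have /eqP := psumr_eq0P (fun j _ => ge0 i j) (H1 i isT) (i:=j) isT.
rewrite mulf_eq0 (gt_eqF hij) /= mul_conjC_eq0 subr_eq0 => /eqP //.
Qed.

Lemma partA : regular_mxpoly (LDF_poly A) /\ ~ is_eigenvalue A 0.
Proof.
split.
  apply/eqP => h.
  have : \det (map_mx (horner_eval 0) (LDF_poly A)) = 0.
    by rewrite det_map_mx h rmorph0.
  have -> : map_mx (horner_eval 0) (LDF_poly A) = 1%:M.
    by apply/matrixP => i j; rewrite !mxE horner_evalE !hornerE /= !mulr0 subr0 add0r.
  by rewrite det1 => /eqP; rewrite oner_eq0.
rewrite /is_eigenvalue /LDF expr0n !scale0r subrr add0r det1 => /eqP.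
by rewrite oner_eq0.
Qed.

Lemma deg_row (u : 'rV[C]_N) j :
  (u *m (degmx A - 1%:M)^T) 0 j = u 0 j * (wdeg A j - 1).
Proof.
rewrite mxE (bigD1 j) //= big1 => [|i ni]; last by rewrite !mxE eq_sym (negbTE ni) subrr mulr0.
by rewrite !mxE eqxx addr0.
Qed.

Lemma partC : geom_mult_inf A = num_deg_one A /\
        (is_eigenvalue_inf A <-> exists i, wdeg A i = 1).
Proof.
have kd : geom_mult_inf A = num_deg_one A.
  apply: (@kerdim_basis _ _ _ _ (fun r i => (r == i)%:R)).
  - by move=> r _; rewrite eqxx.
  - by move=> r s _ _ /negbTE ->.
  - move=> r; rewrite inE => /eqP hr; apply/rowP => j.
    rewrite deg_row !mxE; case: (eqVneq r j) => [<-|nrj]; first by rewrite hr subrr mulr0.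
    by rewrite mul0r.
  - move=> u hu; apply/rowP => j; rewrite summxE.
    have := congr1 (fun M : 'rV[C]_N => M 0 j) hu; rewrite deg_row mxE => /eqP.
    rewrite mulf_eq0 subr_eq0 => h.
    case: (boolP (wdeg A j == 1)) => hj.
      rewrite (bigD1 j) ?inE //= big1 ?addr0.
        by rewrite !mxE eqxx mulr1.
      by move=> r /andP[_ nr]; rewrite !mxE (negbTE nr) mulr0.
    rewrite big1.
      by move: h; rewrite (negbTE hj) orbF => /eqP.
    move=> r hr; rewrite !mxE; case: (eqVneq r j) => [er|]; last by rewrite mulr0.
    by move: hr hj; rewrite inE er => ->.
split=> //.
have -> : is_eigenvalue_inf A <-> (0 < geom_mult_inf A)%N.
  rewrite /is_eigenvalue_inf /LDF_rev !scale0r subr0 expr0n scale0r addr0.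
  exact: det_kerdim.
rewrite kd /num_deg_one; split => [/card_gt0P [i]|[i hi]].
  by rewrite inE => /eqP; exists i.
by apply/card_gt0P; exists i; rewrite inE hi.
Qed.

Lemma edge_sym : symmetric (edge A).
Proof. by move=> i j; rewrite /edge Asym. Qed.

Lemma csym : connect_sym (edge A).
Proof. exact: sym_connect_sym edge_sym. Qed.

Lemma roots_conn r s : roots (edge A) r -> roots (edge A) s ->
  connect (edge A) r s -> r = s.
Proof.
move=> /eqP hr /eqP hs /(fingraph.rootP csym) e.
by rewrite -hr -hs e.
Qed.

Lemma conn_root i : connect (edge A) (fingraph.root (edge A) i) i.
Proof. by rewrite csym connect_root. Qed.

Lemma edge_conn r i j : edge A i j -> connect (edge A) r i = connect (edge A) r j.
Proof. by move=> e; apply: (same_connect1r csym). Qed.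

Lemma rootsroot i : roots (edge A) (fingraph.root (edge A) i).
Proof. exact: (@roots_root _ (edge A) csym i). Qed.

Lemma conn_roots_eq r i : roots (edge A) r -> connect (edge A) r i ->
  r = fingraph.root (edge A) i.
Proof.
move=> hr c; apply: roots_conn => //; first exact: rootsroot.
exact: connect_trans c (connect_root _ _).
Qed.

Lemma hr1 : (1 : C) * 1 = 1. Proof. by rewrite mulr1. Qed.
Lemma hrc1 : (1 : C)^* = 1. Proof. exact: rmorph1. Qed.
Lemma hrN1 : (-1 : C) * -1 = 1. Proof. by rewrite mulrNN mulr1. Qed.
Lemma hrcN1 : (-1 : C)^* = -1. Proof. exact: rmorphN1. Qed.

Lemma partB (hN : (0 < N)%N) :
  is_eigenvalue A 1 /\ geom_mult A 1 = num_components A.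
Proof.
have kd : geom_mult A 1 = num_components A.
  rewrite /geom_mult /kerdim /num_components.
  have -> : n_comp (edge A) 'I_N = #|[set x | roots (edge A) x]|.
    by apply: eq_card => x; rewrite !inE andbT.
  apply: (@kerdim_basis _ _ _ _ (fun r i => (connect (edge A) r i)%:R)).
  - by move=> r _; rewrite connect0.
  - move=> r s; rewrite !inE => hr hs nrs.
    case: (boolP (connect (edge A) r s)) => [c|//].
    by move: nrs; rewrite (roots_conn _ _ hr hs c) eqxx.
  - move=> r _; apply/(ker_char _ hr1 hrc1) => i j hij.
    by rewrite !mxE mul1r (edge_conn r _ _ hij).
  - move=> u /(ker_char _ hr1 hrc1) hu.
    have cst i j : connect (edge A) i j -> u 0 i = u 0 j.
      move=> c.
      have cl : closed (edge A) [pred k | u 0 k == u 0 i].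
        by move=> k l /hu; rewrite !inE mul1r => ->.
      have := closed_connect cl c; rewrite !inE eqxx => /esym/eqP.
      by move->.
    apply/rowP => i; rewrite summxE.
    rewrite (bigD1 (fingraph.root (edge A) i)) ?inE ?rootsroot //= big1 ?addr0.
      by rewrite !mxE conn_root mulr1; apply: cst; exact: connect_root.
    move=> r /andP[]; rewrite inE => hr nr; rewrite !mxE.
    case: (boolP (connect (edge A) r i)) => c; last by rewrite mulr0.
    by move: nr; rewrite -(conn_roots_eq _ _ hr c) eqxx.
split=> //.
apply/det_kerdim; rewrite -/(kerdim _) -/(geom_mult _ _) kd.
rewrite /num_components /n_comp_mem; apply/card_gt0P.
exists (fingraph.root (edge A) (Ordinal hN)); rewrite !inE rootsroot.
by [].
Qed.

Definition colP_pred (r : 'I_N) (f : {ffun 'I_N -> bool}) : bool :=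
  [forall i, forall j,
     (connect (edge A) r i && connect (edge A) r j && edge A i j) ==> (f i != f j)].

Definition col (r : 'I_N) : {ffun 'I_N -> bool} :=
  odflt [ffun=> false] [pick f | colP_pred r f].

Lemma colP r : bipartite_comp A r -> forall i j,
  connect (edge A) r i -> connect (edge A) r j -> edge A i j -> col r i != col r j.
Proof.
move=> /existsP [f hf] i j ci cj e.
rewrite /col; case: pickP => [g /forallP /(_ i) /forallP /(_ j)|/(_ f)].
  by rewrite ci cj e.
by rewrite /colP_pred hf.
Qed.

Definition eps (r i : 'I_N) : C := if col r i == col r r then 1 else -1.

Lemma eps_edge r i j : bipartite_comp A r ->
  connect (edge A) r i -> connect (edge A) r j -> edge A i j -> eps r i = - eps r j.
Proof.
move=> b ci cj e; have := colP _ b _ _ ci cj e; rewrite /eps.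
by case: (col r i); case: (col r j); case: (col r r) => //=; rewrite opprK.
Qed.

Lemma partD :
  (is_eigenvalue A (-1) <-> (0 < num_bipartite_components A)%N) /\
        ((0 < num_bipartite_components A)%N ->
           geom_mult A (-1) = num_bipartite_components A).
Proof.
have kd : geom_mult A (-1) = num_bipartite_components A.
  rewrite /geom_mult /kerdim /num_bipartite_components.
  apply: (@kerdim_basis _ _ _ _ (fun r i => if connect (edge A) r i then eps r i else 0)).
  - by move=> r _; rewrite connect0 /eps eqxx.
  - move=> r s; rewrite !inE => /andP[hr _] /andP[hs _] nrs.
    case: (boolP (connect (edge A) r s)) => [c|//].
    by move: nrs; rewrite (roots_conn _ _ hr hs c) eqxx.
  - move=> r; rewrite inE => /andP[_ b]; apply/(ker_char _ hrN1 hrcN1) => i j hij.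
    rewrite !mxE -(edge_conn r _ _ hij).
    case: (boolP (connect (edge A) r i)) => ci; last by rewrite mulr0.
    have cj : connect (edge A) r j by rewrite -(edge_conn r _ _ hij).
    by rewrite (eps_edge _ _ _ b ci cj hij) mulN1r.
  - move=> u /(ker_char _ hrN1 hrcN1) hu.
    have hu' k l : edge A k l -> u 0 k = - u 0 l by move=> /hu; rewrite mulN1r.
    have L1 r i : bipartite_comp A r -> connect (edge A) r i -> u 0 i = eps r i * u 0 r.
      move=> b c.
      have cl : closed (edge A) [pred k | connect (edge A) r k ==> (u 0 k == eps r k * u 0 r)].
        move=> k l e; rewrite !inE -(edge_conn r _ _ e).
        case: (boolP (connect (edge A) r k)) => //= ck.
        have cl' : connect (edge A) r l by rewrite -(edge_conn r _ _ e).
        by rewrite (hu' _ _ e) (eps_edge _ _ _ b ck cl' e) mulNr eqr_opp.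
      have := closed_connect cl c; rewrite !inE connect0 c /eps eqxx mul1r eqxx /=.
      by move/esym/eqP.
    have Z r i : u 0 r = 0 -> connect (edge A) r i -> u 0 i = 0.
      move=> h0 c.
      have cl : closed (edge A) [pred k | u 0 k == 0].
        by move=> k l e; rewrite !inE (hu' _ _ e) oppr_eq0.
      by have := closed_connect cl c; rewrite !inE h0 eqxx => /esym/eqP.
    have L2 r i : ~~ bipartite_comp A r -> connect (edge A) r i -> u 0 i = 0.
      move=> nb c; apply: (Z r) => //; apply/eqP; apply: contraNT nb => nz.
      have pm k : connect (edge A) r k -> (u 0 k == u 0 r) || (u 0 k == - u 0 r).
        move=> ck.
        have cl : closed (edge A)
            [pred k | connect (edge A) r k ==> ((u 0 k == u 0 r) || (u 0 k == - u 0 r))].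
          move=> k1 l e; rewrite !inE -(edge_conn r _ _ e).
          case: (boolP (connect (edge A) r k1)) => //= _.
          by rewrite (hu' _ _ e) eqr_oppLR eqr_opp orbC.
        by have := closed_connect cl ck; rewrite !inE connect0 eqxx ck /= => <-.
      apply/existsP; exists [ffun k => u 0 k == u 0 r].
      apply/forallP => k; apply/forallP => l; apply/implyP => /andP[/andP[ck cl] e].
      rewrite !ffunE (hu' _ _ e).
      have nNr : (- u 0 r == u 0 r) = false by rewrite eqNr (negbTE nz).
      case/orP: (pm l cl) => /eqP ->; first by rewrite nNr eqxx.
      by rewrite opprK eqxx eq_sym nNr.
    apply/rowP => i; rewrite summxE.
    set rho := fingraph.root (edge A) i.
    have crho : connect (edge A) rho i by exact: conn_root.
    case: (boolP (bipartite_comp A rho)) => b.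
      rewrite (bigD1 rho) ?inE ?rootsroot ?b //= big1 ?addr0.
        by rewrite !mxE crho (L1 _ _ b crho) mulrC.
      move=> r /andP[]; rewrite inE => /andP[hr _] nr; rewrite !mxE.
      case: (boolP (connect (edge A) r i)) => c; last by rewrite mulr0.
      by move: nr; rewrite /rho -(conn_roots_eq _ _ hr c) eqxx.
    rewrite big1 ?(L2 _ _ b crho) // => r; rewrite inE => /andP[hr br]; rewrite !mxE.
    case: (boolP (connect (edge A) r i)) => c; last by rewrite mulr0.
    by move: br b; rewrite /rho -(conn_roots_eq _ _ hr c) => ->.
split=> //.
by rewrite -kd /geom_mult /kerdim -det_kerdim.
Qed.
End G.

Theorem proposition3 (C : numClosedFieldType) (N : nat) (A : 'M[C]_N)
  (hN : (0 < N)%N)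
  (hsym : A^T = A)
  (hnonneg : forall i j, 0 <= A i j)
  (hdiag : forall i, A i i = 0) :
  [/\ regular_mxpoly (LDF_poly A) /\ ~ is_eigenvalue A 0,
      is_eigenvalue A 1 /\ geom_mult A 1 = num_components A,
      geom_mult_inf A = num_deg_one A /\
        (is_eigenvalue_inf A <-> exists i, wdeg A i = 1) &
      (is_eigenvalue A (-1) <-> (0 < num_bipartite_components A)%N) /\
        ((0 < num_bipartite_components A)%N ->
           geom_mult A (-1) = num_bipartite_components A)].
Proof.
split.
- exact: partA.
- exact: partB.
- exact: partC.
- exact: partD.
Qed.
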